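(* Fix $c\in(0,1/2)$. Each of the following classes $\mathbb D$ of distributions on $\mathbb R^d\times\mathbb R$ satisfies Condition 3 with constant $c$: (1) (Polynomial log-densities) the class of distributions $\mathcal P$ with $\mathrm{supp}(\mathcal P_X)=\mathbb R^d$ and otherwise arbitrary $x$-marginal $\mathcal P_X$, whose conditional density satisfies $\mathcal P(y\mid x)\propto e^{f_{\mathcal P}(x,y)}$ for some polynomial $f_{\mathcal P}$ in $(x,y)$ (with $\int e^{f_{\mathcal P}(x,y)}dy<\infty$ for all $x$); (2) (Polynomial expectations) the class of distributions $\mathcal P$ with $\mathrm{supp}(\mathcal P_X)=\mathbb R^d$ and otherwise arbitrary $x$-marginal, such that $\mathbb E_{(x,y)\sim\mathcal P}[y\mid X=x]=f_{\mathcal P}(x)$ for some polynomial $f_{\mathcal P}$.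
   Context: For a distribution $\mathcal P$ with density on $\mathbb R^d\times\mathbb R$, $\mathcal P(x,y)$ denotes its density, $\mathcal P_X$ its $x$-marginal and $\mathcal P(y\mid x)$ its conditional density. $\mathrm{vol}$ denotes Lebesgue measure. Condition 3 (constant $c$): for all $\mathcal P,\mathcal Q\in\mathbb D$ with $\mathbb E_{(x,y)\sim\mathcal P}[y]\neq\mathbb E_{(x,y)\sim\mathcal Q}[y]$, either $\mathcal P_X\neq\mathcal Q_X$, or there is no set $S\subseteq\mathbb R^d$ with $\mathrm{vol}(S)\ge c$ such that $\mathcal P(x,y)=\mathcal Q(x,y)$ for all $(x,y)\in S\times\mathbb R$. *)

(* Defs.v *)
From HB Require Import structures.
From mathcomp Require Import all_boot all_order all_algebra.
From mathcomp Require Import all_classical all_reals all_analysis.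

Set Implicit Arguments.
Unset Strict Implicit.
Unset Printing Implicit Defensive.
Import Order.TTheory GRing.Theory Num.Theory.
Local Open Scope classical_set_scope.
Local Open Scope ring_scope.

Record mspace (R : realType) := MSpace {
  ms_disp : measure_display;
  ms_car : measurableType ms_disp;
  ms_mu : {measure set ms_car -> \bar R} }.

(* Euclidean space R^n with its Lebesgue measure, built as iterated products:
   R^0 = a point (with the Dirac mass, i.e. 0-dim Lebesgue measure),
   R^(n+1) = R^n * R with the product measure vol_n \x lebesgue_measure. *)
Fixpoint Rsp (R : realType) (n : nat) : mspace R :=
  match n with
  | 0 => @MSpace R _ unit (@dirac _ unit tt R)
  | n'.+1 => @MSpace R _ _
               (ms_mu (Rsp R n') \x (@lebesgue_measure R))%E
  end.

Definition Rn (R : realType) (n : nat) := ms_car (Rsp R n).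
Definition vol (R : realType) (n : nat) : set (Rn R n) -> \bar R := ms_mu (Rsp R n).
Arguments vol : clear implicits.

Local Open Scope ereal_scope.

Section Distributions.
Variables (R : realType) (d : nat).

(* A (candidate) distribution on R^d x R is given by its joint density
   p x y = P(x,y) with respect to Lebesgue measure on R^(d+1). *)
Definition joint (p : Rn R d -> R -> R) : Rn R d.+1 -> R :=
  fun z => p z.1 z.2.

Definition is_density (p : Rn R d -> R -> R) : Prop :=
  (forall x y, (0 <= p x y)%R) /\
  measurable_fun setT (joint p) /\
  \int[vol R d.+1]_z (joint p z)%:E = 1.

Definition law (p : Rn R d -> R -> R) (B : set (Rn R d.+1)) : \bar R :=
  \int[vol R d.+1]_(z in B) (joint p z)%:E.

Definition marginal_law (p : Rn R d -> R -> R) (A : set (Rn R d)) : \bar R :=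
  law p (A `*` setT).

Definition same_marginal (p q : Rn R d -> R -> R) : Prop :=
  forall A, measurable A -> marginal_law p A = marginal_law q A.

Definition marginal_density (p : Rn R d -> R -> R) (x : Rn R d) : \bar R :=
  \int[@lebesgue_measure R]_y (p x y)%:E.

(* supp(P_X) = R^d, read as: the marginal density is positive
   (Lebesgue-)almost everywhere on R^d. *)
Definition full_support (p : Rn R d -> R -> R) : Prop :=
  {ae vol R d, forall x, 0 < marginal_density p x}.

Definition cond_density (p : Rn R d -> R -> R) (x : Rn R d) (y : R) : R :=
  (p x y / fine (marginal_density p x))%R.

Definition mean_y (p : Rn R d -> R -> R) : \bar R :=
  \int[vol R d.+1]_z (z.2 * joint p z)%:E.

Definition has_mean_y (p : Rn R d -> R -> R) : Prop :=
  (vol R d.+1).-integrable setT (fun z => (z.2 * joint p z)%:E).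

Definition cond_mean (p : Rn R d -> R -> R) (x : Rn R d) : R :=
  (fine (\int[@lebesgue_measure R]_y (y * p x y)%:E)
     / fine (marginal_density p x))%R.

End Distributions.

(* Polynomial functions on R^n (R^(n+1) = R^n x R): on R^0 the constants;
   on R^n x R the functions (x,y) |-> sum_{i<k} g_i(x) y^i with each g_i a
   polynomial function on R^n. *)
Fixpoint is_poly (R : realType) (n : nat) : (Rn R n -> R) -> Prop :=
  match n return (Rn R n -> R) -> Prop with
  | 0 => fun f => exists a : R, forall x, f x = a
  | n'.+1 => fun f => exists (k : nat) (g : nat -> Rn R n' -> R),
      (forall i, is_poly (g i)) /\
      (forall z : Rn R n'.+1, f z = \sum_(i < k) (g i z.1 * z.2 ^+ i))%R
  end.

Definition condition3 (R : realType) (d : nat) (c : R)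
    (D : (Rn R d -> R -> R) -> Prop) : Prop :=
  forall p q, D p -> D q ->
    has_mean_y p -> has_mean_y q -> mean_y p <> mean_y q ->
    ~ same_marginal p q \/
    ~ (exists S : set (Rn R d), measurable S /\ c%:E <= vol R d S /\
         (forall x y, S x -> p x y = q x y)).

Definition poly_logdensity_class (R : realType) (d : nat)
    (p : Rn R d -> R -> R) : Prop :=
  is_density p /\ full_support p /\
  exists f : Rn R d.+1 -> R, is_poly f /\
    (forall x : Rn R d,
       \int[@lebesgue_measure R]_y (expR (f (x, y)))%:E < +oo) /\
    {ae vol R d, forall x, forall y,
       cond_density p x y =
       (expR (f (x, y)) /
        fine (\int[@lebesgue_measure R]_y' (expR (f (x, y'))))%:E)%R}.

Definition poly_expectation_class (R : realType) (d : nat)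
    (p : Rn R d -> R -> R) : Prop :=
  is_density p /\ full_support p /\
  exists f : Rn R d -> R, is_poly f /\
    {ae vol R d, forall x,
       (@lebesgue_measure R).-integrable setT (fun y => (y * p x y)%:E) /\
       cond_mean p x = f x}.

(* Main.v *)
Require Import Defs.
From HB Require Import structures.
From mathcomp Require Import all_boot all_order all_algebra.
From mathcomp Require Import all_classical all_reals all_analysis.
From mathcomp Require Import measurable_realfun.
From mathcomp Require Import ring lra.
Set Implicit Arguments.
Unset Strict Implicit.
Unset Printing Implicit Defensive.
Import Order.TTheory GRing.Theory Num.Theory.
Import numFieldNormedType.Exports.
Local Open Scope classical_set_scope.
Local Open Scope ring_scope.
Lemma poly_measurable (R : realType) n (f : Rn R n -> R) :
  is_poly f -> measurable_fun setT f.
Proof.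
elim: n f => [|n IH] f /=.
  by move=> [a fa]; rewrite (_ : f = cst a); [exact: measurable_cst|apply/funext].
move=> [k [g [pg fE]]].
rewrite (_ : f = fun z => \sum_(i < k) (g i z.1 * z.2 ^+ i)%R); last exact/funext.
apply: measurable_sum => i.
apply: measurable_realfun.measurable_funM.
  exact: (measurableT_comp (IH _ (pg i)) measurable_fst).
exact: measurable_realfun.measurable_funX measurable_snd.
Qed.
Lemma mzero_set d (T : measurableType d) (R : realType) (f : T -> R) (a : R) :
  measurable_fun setT f -> measurable [set x | f x = a].
Proof. by move=> mf; have := mf measurableT [set a] (measurable_set1 a); rewrite setTI. Qed.

Lemma roots_seq (R : idomainType) (p : {poly R}) : p != 0 ->
  exists s : seq R, forall y, root p y -> y \in s.
Proof.
move: {2}(size p) (leqnn (size p)) => m; elim: m p => [|m IH] p.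
  by rewrite leqn0 size_poly_eq0 => /eqP ->; rewrite eqxx.
move=> sp p0.
have [[a ra]|nr] := pselect (exists a, root p a); last first.
  by exists [::] => y ry; exfalso; apply: nr; exists y.
have [q pq] := factor_theorem p a ra.
have q0 : q != 0 by apply: contra p0; rewrite pq => /eqP ->; rewrite mul0r.
have [|s Hs] := IH q _ q0.
  move: sp; rewrite pq size_mul// ?polyXsubC_eq0// size_XsubC addn2 /=.
  by [].
exists (a :: s) => y; rewrite pq rootM => /orP[/Hs ys|].
  by rewrite in_cons ys orbT.
by rewrite root_XsubC in_cons => ->.
Qed.

Lemma leb_roots0 (R : realType) (a : nat -> R) k :
  (exists2 i, (i < k)%N & a i != 0) ->
  (@lebesgue_measure R) [set y | (\sum_(i < k) a i * y ^+ i)%R = 0%R] = 0%E.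
Proof.
move=> [i ik ai].
have p0 : \poly_(i < k) a i != 0.
  apply/eqP => /(congr1 (fun p : {poly R} => p`_i)); rewrite coef_poly ik coef0.
  by move/eqP; rewrite (negbTE ai).
have [s Hs] := roots_seq p0.
apply: countable_lebesgue_measure0.
apply: finite_set_countable.
apply: (sub_finite_set _ (finite_seq s)) => y /= hy.
by apply: Hs; rewrite /root horner_poly hy.
Qed.
Local Open Scope ereal_scope.
Definition mk_sf d (T : measurableType d) (R : realType) (m : {measure set T -> \bar R})
  (H : sigma_finite setT m) : {sigma_finite_measure set T -> \bar R} :=
  @SigmaFiniteMeasure.Pack _ _ _ (m : set T -> \bar R)
    (@SigmaFiniteMeasure.Class _ _ _ _ _
       (Measure.measure_function_Content_isMeasure_mixin (Measure.class m))
       (isSFinite.Build _ _ _ (m : set T -> \bar R) (sfinite_measure_sigma_finite H))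
       (isSigmaFinite.Build _ _ _ (m : set T -> \bar R) H)).

Lemma prod_sigma_finite d1 d2 (T1 : measurableType d1) (T2 : measurableType d2) (R : realType)
  (m1 m2 : _) : sigma_finite setT (@SigmaFiniteMeasure.sort d1 T1 R m1 \x @SigmaFiniteMeasure.sort d2 T2 R m2).
Proof.
have /sigma_finiteP[F [TF ndF Foo]] := sigma_finiteT m1.
have /sigma_finiteP[G [TG ndG Goo]] := sigma_finiteT m2.
exists (fun n => F n `*` G n).
 rewrite -setXTT TF TG predeqE => -[x y]; split.
    move=> [/= [n _ Fnx] [k _ Gky]]; exists (maxn n k) => //; split.
    - by move: x Fnx; exact/subsetPset/ndF/leq_maxl.
    - by move: y Gky; exact/subsetPset/ndG/leq_maxr.
  by move=> [n _ []/= ? ?]; split; exists n.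
move=> k; have [? ?] := Foo k; have [? ?] := Goo k.
split; first exact: measurableX.
by rewrite product_measure1E// lte_mul_pinfty// ge0_fin_numE.
Qed.

Lemma vol_sigma_finite (R : realType) n : sigma_finite setT (vol R n).
Proof.
elim: n => [|n IH].
  apply: fin_num_fun_sigma_finite; rewrite /vol /=.
    by rewrite measure0.
  by move=> A _; rewrite diracE; case: (tt \in A).
exact: (prod_sigma_finite (mk_sf (m := ms_mu (Rsp R n)) IH) (@lebesgue_measure R)).
Qed.
Definition svol (R : realType) n : {sigma_finite_measure set (Rn R n) -> \bar R} :=
  mk_sf (vol_sigma_finite R n).
Lemma svolE (R : realType) n : (svol R n : set _ -> _) = vol R n. Proof. by []. Qed.
Lemma volS (R : realType) n A : vol R n.+1 A = \int[vol R n]_x (@lebesgue_measure R (xsection A x)).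
Proof. by []. Qed.
Lemma volS' (R : realType) n A : vol R n.+1 A = (svol R n \x @lebesgue_measure R) A.
Proof. by []. Qed.
Lemma poly_null (R : realType) n (f : Rn R n -> R) : is_poly f -> (exists x, f x != 0%R) ->
  vol R n [set x | f x = 0%R] = 0.
Proof.
elim: n f => [|n IH] f.
  move=> [a fa] [x0]; rewrite fa => a0.
  rewrite (_ : [set x | f x = 0%R] = set0) ?measure0//.
  by apply/seteqP; split => x //=; rewrite fa => a00; move: a0; rewrite a00 eqxx.
move=> pf [z0 fz0].
have mf := poly_measurable pf.
move: pf => /= [k [g [pg fE]]].
have [i ik gi0] : exists2 i, (i < k)%N & g i z0.1 != 0%R.
  apply: contrapT => H; move: fz0; rewrite fE big1 ?eqxx// => j _.
  have [gj|gj] := eqVneq (g j z0.1) 0%R; first by rewrite gj mul0r.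
  by exfalso; apply: H; exists j.
have Ni : vol R n [set x | g i x = 0%R] = 0 by apply: IH (pg i) _; exists z0.1.
have mZ : measurable [set x | f x = 0%R].
  exact: mzero_set.
rewrite volS.
rewrite (ae_eq_integral (cst 0)) ?integral0//.
- exact: measurable_fun_xsection.
- exists [set x | g i x = 0%R]; split => //.
  + exact/mzero_set/(poly_measurable (pg i)).
  move=> x /= /not_implyP [_ hx]; apply: contrapT => gix; apply: hx.
  rewrite (_ : xsection _ x = [set y | (\sum_(j < k) g j x * y ^+ j)%R = 0%R]).
    apply: (leb_roots0 (a := fun j => g j x)); exists i => //; exact/eqP.
  apply/seteqP; split => y; rewrite /xsection /= inE /= fE //.
Qed.
Lemma poly_zero_on (R : realType) n (f : Rn R n -> R) (A : set (Rn R n)) :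
  is_poly f -> measurable A -> vol R n A != 0 ->
  {ae vol R n, forall x, A x -> f x = 0%R} -> forall x, f x = 0%R.
Proof.
move=> pf mA A0 aeA x; apply/eqP; apply: contraT => fx.
have Z0 := poly_null pf (ex_intro _ x fx).
have nZ : (vol R n).-negligible [set x | f x = 0%R].
  by apply/negligibleP => //; exact/mzero_set/poly_measurable.
have : (vol R n).-negligible A.
  apply: (negligibleS _ (negligibleU nZ aeA)) => a Aa.
  have [fa|fa] := eqVneq (f a) 0%R; [by left|right] => /=.
  by move=> /(_ Aa); apply/eqP.
by move/negligibleP => /(_ mA) A00; move: A0; rewrite /vol A00 eqxx.
Qed.
Lemma vol_tonelli (R : realType) n (F : Rn R n.+1 -> \bar R) :
  measurable_fun setT F -> (forall z, 0 <= F z) ->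
  \int[vol R n.+1]_z F z = \int[vol R n]_x \int[@lebesgue_measure R]_y F (x, y).
Proof. move=> mF F0; exact: (fubini_tonelli1 (m1 := svol R n) (m2 := @lebesgue_measure R) F). Qed.

Lemma vol_fubini (R : realType) n (F : Rn R n.+1 -> \bar R) :
  (vol R n.+1).-integrable setT F ->
  \int[vol R n.+1]_z F z = \int[vol R n]_x \int[@lebesgue_measure R]_y F (x, y).
Proof. move=> iF; symmetry; exact: (integral12_prod_meas1 (m1 := svol R n) (m2 := @lebesgue_measure R) iF). Qed.

Lemma vol_fubini_meas (R : realType) n (F : Rn R n.+1 -> \bar R) :
  (vol R n.+1).-integrable setT F ->
  measurable_fun setT (fun x => \int[@lebesgue_measure R]_y F (x, y)).
Proof. move=> iF; exact: (measurable_fubini_F (m1 := svol R n) (m2 := @lebesgue_measure R) iF). Qed.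

Lemma vol_fubini_ae (R : realType) n (F : Rn R n.+1 -> \bar R) :
  (vol R n.+1).-integrable setT F ->
  {ae vol R n, forall x, (@lebesgue_measure R).-integrable setT (fun y => F (x, y))}.
Proof. move=> iF; exact: (ae_integrable1 (m1 := svol R n) (m2 := @lebesgue_measure R) iF). Qed.
Lemma marg_int (R : realType) d (p : Rn R d -> R -> R) (A : set (Rn R d)) :
  is_density p -> measurable A ->
  marginal_law p A = \int[vol R d]_(x in A) marginal_density p x.
Proof.
move=> [p0 [mp _]] mA.
rewrite /marginal_law /law integral_mkcond vol_tonelli; last first.
- move=> z; rewrite patchE; case: ifPn => _ //; rewrite lee_fin; exact: p0.
- have mAT : measurable (A `*` [set: R]) by exact: measurableX.
  apply: (measurable_restrictT (fun z : Rn R d.+1 => (joint p z)%:E) mAT).1.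
  apply: (measurable_funS measurableT) => //; exact/measurable_EFinP.
rewrite [RHS]integral_mkcond; apply: eq_integral => x _.
rewrite patchE; case: ifPn => xA.
  apply: eq_integral => y _; rewrite patchE ifT //; apply/mem_set; split => //.
  exact/set_mem.
rewrite integral0_eq // => y _; rewrite patchE ifF //; apply/negbTE/negP.
by move=> /set_mem[/= Ax _]; rewrite (mem_set Ax) in xA.
Qed.
Lemma mdens_ge0 (R : realType) d (p : Rn R d -> R -> R) x :
  is_density p -> 0 <= marginal_density p x.
Proof. by move=> [p0 _]; apply: integral_ge0 => y _; rewrite lee_fin. Qed.

Lemma mdens_meas (R : realType) d (p : Rn R d -> R -> R) :
  is_density p -> measurable_fun setT (marginal_density p).
Proof.
move=> [p0 [mp _]].
have := measurable_fun_fubini_tonelli_F (m2 := @lebesgue_measure R) (fun z : Rn R d.+1 => (joint p z)%:E).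
apply; [exact/measurable_EFinP | by move=> z; rewrite lee_fin; exact: p0].
Qed.

Lemma mdens_int (R : realType) d (p : Rn R d -> R -> R) :
  is_density p -> \int[vol R d]_x marginal_density p x = 1.
Proof.
move=> hp; have := marg_int (A := setT) hp measurableT.
move=> <-; rewrite /marginal_law /law setXTT.
by case: hp => _ [] _ ->.
Qed.

Lemma mdens_integrable (R : realType) d (p : Rn R d -> R -> R) :
  is_density p -> (vol R d).-integrable setT (marginal_density p).
Proof.
move=> hp; apply/integrableP; split; first exact: mdens_meas.
rewrite (eq_integral (marginal_density p)) ?mdens_int ?ltry// => x _.
by rewrite gee0_abs // mdens_ge0.
Qed.

Lemma mdens_fin (R : realType) d (p : Rn R d -> R -> R) :
  is_density p -> {ae vol R d, forall x, marginal_density p x \is a fin_num}.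
Proof.
move=> hp; have := integrable_ae measurableT (mdens_integrable hp).
by apply: filterS => x /(_ I).
Qed.

Lemma same_marg_ae (R : realType) d (p q : Rn R d -> R -> R) :
  is_density p -> is_density q -> same_marginal p q ->
  {ae vol R d, forall x, marginal_density p x = marginal_density q x}.
Proof.
move=> hp hq hpq.
have H : ae_eq (vol R d) setT (marginal_density p) (marginal_density q).
  apply: integral_ae_eq => //; [exact: mdens_integrable|exact: mdens_meas|].
  by move=> E _ mE; rewrite -!marg_int// hpq.
by apply: filterS H => x /(_ I).
Qed.
Lemma lebT (R : realType) : (@lebesgue_measure R) setT = +oo.
Proof. by rewrite -set_itvNyy lebesgue_measure_itv /=. Qed.

Lemma volXT0 (R : realType) n (N : set (Rn R n)) :
  measurable N -> vol R n N = 0 -> vol R n.+1 (N `*` setT) = 0.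
Proof.
move=> mN N0; rewrite volS' product_measure1E //.
by rewrite [X in (X * _)%E]N0 mul0e.
Qed.

Lemma volXTpos (R : realType) n (N : set (Rn R n)) :
  measurable N -> 0 < vol R n N -> vol R n.+1 (N `*` setT) = +oo.
Proof.
move=> mN N0; rewrite volS' product_measure1E //.
transitivity (vol R n N * +oo)%E; [congr (_ * _); exact: lebT | exact: gt0_muley].
Qed.

Lemma aeN d (T : measurableType d) (R : realType) (mu : {measure set T -> \bar R}) (P : T -> Prop) :
  {ae mu, forall x, P x} -> exists N, [/\ measurable N, mu N = 0 & forall x, ~ N x -> P x].
Proof.
move=> [N [mN N0 sN]]; exists N; split => // x Nx; apply: contrapT => Px.
exact: Nx (sN x Px).
Qed.
Local Close Scope ereal_scope.
Lemma is_poly_ext (R : realType) n (f g : Rn R n -> R) :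
  (forall x, f x = g x) -> is_poly f -> is_poly g.
Proof. by move=> fg; rewrite (_ : f = g) //; exact/funext. Qed.

Lemma is_poly0' (R : realType) n : is_poly (fun _ : Rn R n => 0).
Proof.
elim: n => [|n IH] /=; first by exists 0.
by exists 0%N, (fun _ _ => 0); split => [i|z]; [exact: IH|rewrite big_ord0].
Qed.
Lemma is_poly0 (R : realType) n : is_poly (fun _ : Rn R n => 0).
Proof.
case: n => [|n] /=; first by exists 0.
by exists 0%N, (fun _ _ => 0); split => [i|z]; [exact: is_poly0'|rewrite big_ord0].
Qed.

Lemma sum_widen (R : realType) n k K (a : nat -> Rn R n -> R) x (y : R) : (k <= K)%N ->
  \sum_(i < k) a i x * y ^+ i =
  \sum_(i < K) (if (i < k)%N then a i else (fun _ => 0)) x * y ^+ i.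
Proof.
move=> kK; rewrite (big_ord_widen K (fun i => a i x * y ^+ i) kK) big_mkcond /=.
by apply: eq_bigr => i _; case: ifP => //; rewrite mul0r.
Qed.

Lemma is_poly_sub (R : realType) n (f g : Rn R n -> R) :
  is_poly f -> is_poly g -> is_poly (fun x => f x - g x).
Proof.
elim: n f g => [|n IH] f g /=.
  by move=> [a fa] [b gb]; exists (a - b) => x; rewrite fa gb.
move=> [k1 [a [pa fE]]] [k2 [b [pb gE]]].
pose a' i := if (i < k1)%N then a i else (fun _ => 0).
pose b' i := if (i < k2)%N then b i else (fun _ => 0).
exists (k1 + k2)%N, (fun i x => a' i x - b' i x); split.
  move=> i; apply: IH; rewrite /a' /b'; case: ifP => _ //; exact: is_poly0.
move=> z; rewrite fE gE (sum_widen _ _ _ (leq_addr k2 k1)) (sum_widen _ _ _ (leq_addl k1 k2)).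
by rewrite -sumrB; apply: eq_bigr => i _; rewrite mulrBl.
Qed.

Lemma is_poly_lift (R : realType) n (u : Rn R n -> R) :
  is_poly u -> is_poly (fun z : Rn R n.+1 => u z.1).
Proof.
move=> pu; exists 1%N, (fun _ => u); split => // z.
by rewrite big_ord1 expr0 mulr1.
Qed.

Lemma is_poly_at0 (R : realType) n (f : Rn R n.+1 -> R) :
  is_poly f -> is_poly (fun x : Rn R n => f (x, 0)).
Proof.
move=> [[|k] [a [pa fE]]].
  by apply: (is_poly_ext _ (is_poly0 R n)) => x; rewrite fE big_ord0.
apply: (is_poly_ext _ (pa 0%N)) => x; rewrite fE big_ord_recl /= expr0 mulr1.
by rewrite big1 ?addr0 // => i _; rewrite expr0n /= mulr0.
Qed.
Local Open Scope ereal_scope.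
Lemma ae_and d (T : measurableType d) (R : realType) (mu : {measure set T -> \bar R}) (P Q : T -> Prop) :
  {ae mu, forall x, P x} -> {ae mu, forall x, Q x} -> {ae mu, forall x, P x /\ Q x}.
Proof. by apply: filterS2 => x a b. Qed.

Lemma fine_pos (R : realType) (m : \bar R) : m \is a fin_num -> 0 < m -> (0 < fine m)%R.
Proof. by move=> mf m0; apply: fine_gt0; rewrite m0 /= ltey_eq mf. Qed.

Lemma class2 (R : realType) d (c : R) : (0 < c)%R -> condition3 c (@poly_expectation_class R d).
Proof.
move=> c0 p q [dp [fsp [fp [pfp aep]]]] [dq [fsq [fq [pfq aeq]]]] mp mq neq.
have [sm|nsm] := pselect (same_marginal p q); last by left.
right => -[S [mS [cS Spq]]]; apply: neq.
have S0 : vol R d S != 0 by rewrite gt_eqF // (lt_le_trans _ cS) // lte_fin.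
have aeG := ae_and aep (ae_and aeq (ae_and (same_marg_ae dp dq sm) (ae_and (mdens_fin dp) fsp))).
have fpq : forall x, fp x = fq x.
  have H := poly_zero_on (is_poly_sub pfp pfq) mS S0.
  move=> x; apply/eqP; rewrite -subr_eq0; apply/eqP; apply: H => {x}.
  apply: filterS aeG => x [[_ cp] [[_ cq] _]] Sx.
  rewrite -cp -cq /cond_mean /marginal_density.
  have -> : p x = q x by apply/funext => y; exact: Spq.
  by rewrite subrr.
rewrite /mean_y (vol_fubini mp) (vol_fubini mq).
apply: (ae_eq_integral (mu := vol R d)) => //; [exact: vol_fubini_meas mp|exact: vol_fubini_meas mq|].
apply: filterS aeG => x [[ip cp] [[iq cq] [em [fin pos]]]] _ /=.
have key : forall r : Rn R d -> R -> R,
    (@lebesgue_measure R).-integrable setT (fun y => (y * r x y)%:E) ->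
    cond_mean r x = fq x -> marginal_density r x = marginal_density p x ->
    \int[@lebesgue_measure R]_y (y * r x y)%:E = (fq x * fine (marginal_density p x))%:E.
  move=> r ir cr mr.
  rewrite -(fineK (integrable_fin_num measurableT ir)); congr EFin.
  move: cr; rewrite /cond_mean mr => <-; rewrite divfK //.
  by rewrite gt_eqF // fine_pos.
rewrite /joint /= (key p ip) ?cp ?fpq // (key q iq cq) // -em.
Qed.
Lemma ae_lift (R : realType) n (P : Rn R n -> Prop) :
  {ae vol R n, forall x, P x} -> {ae vol R n.+1, forall z : Rn R n.+1, P z.1}.
Proof.
move=> /aeN [N [mN N0 HN]]; exists (N `*` setT); split.
- exact: measurableX.
- exact: volXT0.
- move=> z /= nP; split => //; apply: contrapT => Nz; exact: nP (HN _ Nz).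
Qed.

Lemma cond_densityK (R : realType) d (r : Rn R d -> R -> R) x y :
  fine (marginal_density r x) != 0%R ->
  (cond_density r x y * fine (marginal_density r x))%R = r x y.
Proof. by move=> h; rewrite /cond_density divfK. Qed.

Lemma alg_div (R : realType) (a b P Q : R) : P != 0%R -> Q != 0%R -> b != 0%R ->
  (a / P = b / Q -> a / b = P / Q)%R.
Proof.
move=> P0 Q0 b0 e; transitivity ((a / P) * P / b)%R; first by field; rewrite b0 P0.
by rewrite e; field; rewrite b0 Q0.
Qed.

Lemma alg_div2 (R : realType) (a e Q : R) : e != 0%R -> (a * e / (e * Q) = a / Q)%R.
Proof.
move=> e0; have [->|Q0] := eqVneq Q 0%R; first by rewrite mulr0 !invr0 !mulr0.
by field; rewrite Q0 e0.
Qed.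

Lemma class1 (R : realType) d (c : R) : (0 < c)%R -> condition3 c (@poly_logdensity_class R d).
Proof.
move=> c0 p q [dp [fsp [fp [pfp [Zpf aep]]]]] [dq [fsq [fq [pfq [Zqf aeq]]]]] mp mq neq.
have [sm|nsm] := pselect (same_marginal p q); last by left.
right => -[S [mS [cS Spq]]]; apply: neq.
have Spos : 0 < vol R d S by rewrite (lt_le_trans _ cS) // lte_fin.
have aeG := ae_and aep (ae_and aeq (ae_and (same_marg_ae dp dq sm) (ae_and (mdens_fin dp) fsp))).
pose Z := fun (f : Rn R d.+1 -> R) x => \int[@lebesgue_measure R]_y (expR (f (x, y)))%:E.
have Zge0 : forall f x, 0 <= Z f x by move=> f x; apply: integral_ge0 => y _; rewrite lee_fin expR_ge0.
have Zfin : forall f x, Z f x < +oo -> Z f x \is a fin_num.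
  by move=> f x h; rewrite ge0_fin_numE // Zge0.
have mpos : forall x, marginal_density p x \is a fin_num -> 0 < marginal_density p x ->
    fine (marginal_density p x) != 0%R.
  by move=> x h1 h2; rewrite gt_eqF // fine_pos.
have Znz : forall (r : Rn R d -> R -> R) f x,
    marginal_density r x \is a fin_num -> 0 < marginal_density r x ->
    (forall y, cond_density r x y = (expR (f (x, y)) / fine (Z f x))%R) ->
    fine (Z f x) != 0%R.
  move=> r f x h1 h2 h3; apply/negP => /eqP Z0.
  have r0 : forall y, r x y = 0%R.
    move=> y; rewrite -(@cond_densityK _ _ r x y); last by rewrite gt_eqF // fine_pos.
    by rewrite h3 Z0 invr0 !mulr0 mul0r.
  move: h2; rewrite /marginal_density (eq_integral (fun _ => 0)) ?integral0 ?ltxx //.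
  by move=> y _; rewrite r0.
have step1 : forall x, (forall y, cond_density p x y = (expR (fp (x, y)) / fine (Z fp x))%R) /\
     (forall y, cond_density q x y = (expR (fq (x, y)) / fine (Z fq x))%R) /\
     marginal_density p x = marginal_density q x /\
     marginal_density p x \is a fin_num /\ 0 < marginal_density p x ->
    S x -> forall y, (fp (x, y) - fq (x, y) = fp (x, 0%R) - fq (x, 0%R))%R.
  move=> x [ap [aq [em [fin pos]]]] Sx.
  have Zp0 := Znz p fp x fin pos ap.
  have Zq0 : fine (Z fq x) != 0%R by apply: (Znz q fq x); rewrite -?em.
  have pq : p x = q x by apply/funext => y; exact: Spq.
  have e : forall y, (expR (fp (x, y)) / fine (Z fp x) = expR (fq (x, y)) / fine (Z fq x))%R.
    by move=> y; rewrite -ap -aq /cond_density /marginal_density pq.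
  have E : forall y, expR (fp (x, y) - fq (x, y))%R = (fine (Z fp x) / fine (Z fq x))%R.
    move=> y; rewrite expRB; apply: (alg_div Zp0 Zq0 _ (e y)).
    by rewrite gt_eqF ?expR_gt0.
  by move=> y; apply: expR_inj; rewrite !E.
have hP := is_poly_sub pfp pfq.
have HP := is_poly_sub hP (is_poly_lift (is_poly_at0 hP)).
have hz := poly_zero_on HP (measurableX mS (@measurableT _ R)).
have {hz} hz : forall z : Rn R d.+1, ((fp z - fq z) - (fp (z.1, 0%R) - fq (z.1, 0%R)) = 0)%R.
  apply: hz; first by rewrite volXTpos.
  apply: filterS (ae_lift aeG) => -[x y] Gx [/= Sx _].
  by rewrite (step1 x Gx Sx y) subrr.
have hxy : forall x y, fp (x, y) = (fq (x, y) + (fp (x, 0%R) - fq (x, 0%R)))%R.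
  move=> x y; have /eqP := hz (x, y); rewrite subr_eq0 /= => /eqP <-.
  by rewrite addrC subrK.
have step3 : forall x, (forall y, cond_density p x y = (expR (fp (x, y)) / fine (Z fp x))%R) /\
     (forall y, cond_density q x y = (expR (fq (x, y)) / fine (Z fq x))%R) /\
     marginal_density p x = marginal_density q x /\
     marginal_density p x \is a fin_num /\ 0 < marginal_density p x ->
    forall y, p x y = q x y.
  move=> x [ap [aq [em [fin pos]]]] y.
  set cx := (fp (x, 0%R) - fq (x, 0%R))%R.
  have mfq : measurable_fun setT (fun y => (expR (fq (x, y)))%:E).
    apply/measurable_EFinP; apply: measurableT_comp; first exact: measurable_expR.
    exact: measurable_fun_pair2 (poly_measurable pfq).
  have ZE : Z fp x = ((expR cx)%:E * Z fq x).
    rewrite /Z -(ge0_integralZl_EFin _ _ _ mfq (expR_ge0 cx)) //.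
    by apply: eq_integral => y' _; rewrite hxy expRD -EFinM mulrC.
  have Zqfin := Zfin fq x (Zqf x).
  have ZE' : fine (Z fp x) = (expR cx * fine (Z fq x))%R.
    by rewrite ZE -[Z fq x](fineK Zqfin) -EFinM.
  have cE : cond_density p x y = cond_density q x y.
    rewrite ap aq ZE' hxy expRD; apply: alg_div2.
    by rewrite gt_eqF ?expR_gt0.
  rewrite -(@cond_densityK _ _ p x y); last by rewrite gt_eqF // fine_pos.
  rewrite cE em cond_densityK //.
  by rewrite -em gt_eqF // fine_pos.
rewrite /mean_y; apply: (ae_eq_integral (mu := vol R d.+1)) => //.
- exact: measurable_int mp.
- exact: measurable_int mq.
apply: filterS (ae_lift aeG) => -[x y] Gx _ /=.
by rewrite /joint /= (step3 x Gx).
Qed.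
Local Close Scope ereal_scope.

Theorem lemma4p6 (R : realType) (d : nat) (c : R) :
  (0 < c)%R -> (c < 1 / 2)%R ->
  condition3 c (@poly_logdensity_class R d) /\
  condition3 c (@poly_expectation_class R d).
Proof. by move=> c0 _; split; [exact: class1|exact: class2]. Qed.
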